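(* Let $\mathcal{G}\rightrightarrows M$ be a locally subductive diffeological groupoid. Then its abelianization $\mathcal{G}^{ab}=\mathcal{G}/(\mathcal{G},\mathcal{G})$ (with the quotient diffeology) is a locally subductive diffeological groupoid.
   Context: A diffeological groupoid is a groupoid object in diffeological spaces; $(\mathcal{G},\mathcal{G})=\bigcup_x(\mathcal{G}_x,\mathcal{G}_x)$ is the union of the commutator subgroups of the isotropy groups, and $\mathcal{G}/(\mathcal{G},\mathcal{G})$ carries the quotient diffeology (maps locally constant or locally of the form $q\circ Q$ with $Q$ a plot of $\mathcal{G}$). A smooth map $f:X\to X'$ is locally subductive at $x$ if for every plot $P$ of $X'$ with $P(0)=f(x)$ there are an open neighborhood $V$ of $0$ and a plot $Q:V\to X$ with $Q(0)=x$ and $f\circ Q=P|_V$; it is a local subduction if locally subductive at all points. A diffeological groupoid is locally subductive if its source and target maps are local subductions. *)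

(* Defs.v *)
From HB Require Import structures.
From mathcomp Require Import all_boot all_order all_algebra.
From mathcomp Require Import all_classical all_reals all_analysis.
From mathcomp Require Import Rstruct Rstruct_topology.

Set Implicit Arguments.
Unset Strict Implicit.
Unset Printing Implicit Defensive.

Import Order.TTheory GRing.Theory Num.Theory.
Import numFieldNormedType.Exports.
Local Open Scope classical_set_scope.
Local Open Scope ring_scope.

Notation Rn n := 'rV[Rdefinitions.R]_n.

Definition Dom (n : nat) (U : set (Rn n)) := {x : Rn n | U x}.

Definition incl (n : nat) (V U : set (Rn n)) (H : V `<=` U) (y : Dom V) : Dom U :=
  exist _ (sval y) (H (sval y) (svalP y)).

Fixpoint Ck (n m : nat) (U : set (Rn n)) (k : nat) (f : Rn n -> Rn m) : Prop :=
  match k with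
  | 0 => forall x, U x -> {for x, continuous f}
  | k'.+1 => (forall x, U x -> differentiable f x) /\
             forall v : Rn n, Ck U k' ('D_v f)
  end.

Definition smooth_map (m n : nat) (V : set (Rn m)) (U : set (Rn n))
  (F : Dom V -> Dom U) : Prop :=
  exists f : Rn m -> Rn n,
    (forall y : Dom V, f (sval y) = sval (F y)) /\ forall k, Ck V k f.

Definition plot_family (X : Type) :=
  forall (n : nat) (U : set (Rn n)), (Dom U -> X) -> Prop.

Definition is_diffeology (X : Type) (plot : plot_family X) : Prop :=
  [/\
      (forall (n : nat) (U : set (Rn n)) (P : Dom U -> X), plot n U P -> open U),
      (forall n (U : set (Rn n)) (x : X), open U -> plot n U (fun _ => x)),
      (forall n (U : set (Rn n)) (P : Dom U -> X), open U ->
         (forall r : Dom U, exists V (HVU : V `<=` U),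
             [/\ open V, V (sval r) & plot n V (P \o incl HVU)]) ->
         plot n U P) &
      (forall n m (U : set (Rn n)) (V : set (Rn m)) (P : Dom U -> X)
              (F : Dom V -> Dom U),
         open V -> smooth_map F -> plot n U P -> plot m V (P \o F))].

Record diffeological_space := DiffSpace {
  dcarrier :> Type;
  dplot : plot_family dcarrier;
  dplotP : is_diffeology dplot }.
Arguments dplot {d n U} _.

Definition smooth (X Y : diffeological_space) (f : X -> Y) : Prop :=
  forall (n : nat) (U : set (Rn n)) (P : Dom U -> X), dplot P -> dplot (f \o P).

Definition locally_subductive_at (X Y : diffeological_space) (f : X -> Y) (x : X)
  : Prop :=
  forall n (U : set (Rn n)) (P : Dom U -> Y) (H0 : U 0),
    dplot P -> P (exist _ 0 H0) = f x ->
    exists V (HVU : V `<=` U) (HV0 : V 0),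
      open V /\
      exists Q : Dom V -> X,
        [/\ dplot Q, Q (exist _ 0 HV0) = x & forall r, f (Q r) = P (incl HVU r)].

Definition local_subduction (X Y : diffeological_space) (f : X -> Y) : Prop :=
  smooth f /\ forall x, locally_subductive_at f x.

(* Groupoid structure: arrows G, objects M, source s, target t, unit u,
   inverse i, composition m (m g h = "g after h", meaningful when s g = t h;
   outside of composable pairs m is an arbitrary total extension). *)
Definition is_groupoid (G M : Type) (s t : G -> M) (u : M -> G) (i : G -> G)
  (m : G -> G -> G) : Prop :=
  [/\ (forall g h, s g = t h -> s (m g h) = s h /\ t (m g h) = t g),
      (forall f g h, s f = t g -> s g = t h -> m (m f g) h = m f (m g h)),
      (forall x, s (u x) = x /\ t (u x) = x),
      (forall g, m (u (t g)) g = g /\ m g (u (s g)) = g) &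
      (forall g, [/\ s (i g) = t g, t (i g) = s g,
                    m g (i g) = u (t g) & m (i g) g = u (s g)])].

(* Smoothness
   of m is smoothness on G^(2) = G x_M G with the subspace diffeology of the
   product diffeology: a plot of G^(2) is a pair of plots (P,Q) of G with
   s o P = t o Q. *)
Definition diffeological_groupoid (G M : diffeological_space) (s t : G -> M)
  (u : M -> G) (i : G -> G) (m : G -> G -> G) : Prop :=
  [/\ is_groupoid s t u i m, smooth s /\ smooth t, smooth u, smooth i &
      forall (n : nat) (U : set (Rn n)) (P Q : Dom U -> G), dplot P -> dplot Q ->
        (forall r, s (P r) = t (Q r)) -> dplot (fun r => m (P r) (Q r))].

Definition locally_subductive_groupoid (G M : diffeological_space) (s t : G -> M)
  (u : M -> G) (i : G -> G) (m : G -> G -> G) : Prop :=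
  [/\ diffeological_groupoid s t u i m, local_subduction s & local_subduction t].

Inductive comm_sub (G M : Type) (s t : G -> M) (u : M -> G) (i : G -> G)
  (m : G -> G -> G) (x : M) : G -> Prop :=
  | comm_unit : comm_sub s t u i m x (u x)
  | comm_comm : forall g h, s g = x -> t g = x -> s h = x -> t h = x ->
      comm_sub s t u i m x (m (m g h) (m (i g) (i h)))
  | comm_mul : forall a b, comm_sub s t u i m x a -> comm_sub s t u i m x b ->
      comm_sub s t u i m x (m a b)
  | comm_inv : forall a, comm_sub s t u i m x a -> comm_sub s t u i m x (i a).

Definition commutator_subgroupoid (G M : Type) (s t : G -> M) (u : M -> G)
  (i : G -> G) (m : G -> G -> G) : set G :=
  fun c => exists x, comm_sub s t u i m x c.

(* The equivalence relation whose classes are the elements of G/(G,G):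
   g ~ h iff g = c h for some c in (G,G) (i.e. s g = s h and g h^-1 in (G,G)). *)
Definition ab_rel (G M : Type) (s t : G -> M) (u : M -> G) (i : G -> G)
  (m : G -> G -> G) (g h : G) : Prop :=
  s g = s h /\ commutator_subgroupoid s t u i m (m g (i h)).

Definition quotient_plot (G : diffeological_space) (Q : Type) (q : G -> Q)
  : plot_family Q :=
  fun n U P => open U /\
    forall r : Dom U, exists V (HVU : V `<=` U),
      [/\ open V, V (sval r) &
          (exists c : Q, forall y, P (incl HVU y) = c) \/
          (exists PG : Dom V -> G, dplot PG /\ forall y, P (incl HVU y) = q (PG y))].

(* Main.v *)
Require Import Defs.
From HB Require Import structures.
From mathcomp Require Import all_boot all_order all_algebra.
From mathcomp Require Import all_classical all_reals all_analysis.
From mathcomp Require Import Rstruct Rstruct_topology.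

Module HA.
Import Order.TTheory GRing.Theory Num.Theory.
Import numFieldNormedType.Exports.
Local Open Scope classical_set_scope.
Local Open Scope ring_scope.

Lemma Ck_cst n m (U : set (Rn n)) k (c : Rn m) : Ck U k (fun _ => c).
Proof.
elim: k c => [|k IH] c /=.
  by move=> x _; apply: cst_continuous.
split => [x _|v]; first exact: differentiable_cst.
have -> : 'D_v (fun _ : Rn n => c) = fun _ => 0.
  by apply: funext => x; rewrite derive_cst.
exact: IH.
Qed.

Lemma Ck_id n (U : set (Rn n)) k : Ck U k id.
Proof.
case: k => [|k] /=.
  by move=> x _.
split => [x _|v]; first exact: ex_diff.
have -> : 'D_v (@id (Rn n)) = fun _ => v.
  by apply: funext => x; rewrite derive_id.
exact: Ck_cst.
Qed.

Lemma Ck_sub n m (U V : set (Rn n)) k (f : Rn n -> Rn m) :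
  V `<=` U -> Ck U k f -> Ck V k f.
Proof.
move=> VU; elim: k f => [|k IH] f /=.
  by move=> H x Vx; apply: H; apply: VU.
case=> H1 H2; split => [x Vx|v]; first by apply: H1; apply: VU.
exact: IH.
Qed.

Lemma open_pre n m (V : set (Rn n)) (W : set (Rn m)) (f : Rn n -> Rn m) :
  open V -> open W -> (forall x, V x -> {for x, continuous f}) ->
  open [set y | V y /\ W (f y)].
Proof.
move=> oV oW cf; rewrite openE => y [Vy Wy].
rewrite /interior /=.
apply: filterI.
  by apply: open_nbhs_nbhs; split.
have := cf y Vy.
move=> /(_ W); apply.
by apply: open_nbhs_nbhs; split.
Qed.

End HA.
Import HA.

Module HB.

Section Alg.
Variables (G M : Type) (s t : G -> M) (u : M -> G) (i : G -> G) (m : G -> G -> G).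
Hypothesis HGr : is_groupoid s t u i m.

Lemma sm {g h} : s g = t h -> s (m g h) = s h.
Proof. by case: HGr => H1 _ _ _ _ H; case: (H1 _ _ H). Qed.
Lemma tm {g h} : s g = t h -> t (m g h) = t g.
Proof. by case: HGr => H1 _ _ _ _ H; case: (H1 _ _ H). Qed.
Lemma su x : s (u x) = x. Proof. by case: HGr => _ _ H3 _ _; case: (H3 x). Qed.
Lemma tu x : t (u x) = x. Proof. by case: HGr => _ _ H3 _ _; case: (H3 x). Qed.
Lemma si g : s (i g) = t g. Proof. by case: HGr => _ _ _ _ H5; case: (H5 g). Qed.
Lemma ti g : t (i g) = s g. Proof. by case: HGr => _ _ _ _ H5; case: (H5 g). Qed.
Lemma mA {f g h} : s f = t g -> s g = t h -> m (m f g) h = m f (m g h).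
Proof. by case: HGr => _ H2 _ _ _; apply: H2. Qed.
Lemma lu g : m (u (t g)) g = g. Proof. by case: HGr => _ _ _ H4 _; case: (H4 g). Qed.
Lemma ru g : m g (u (s g)) = g. Proof. by case: HGr => _ _ _ H4 _; case: (H4 g). Qed.
Lemma rinv g : m g (i g) = u (t g). Proof. by case: HGr => _ _ _ _ H5; case: (H5 g). Qed.
Lemma linv g : m (i g) g = u (s g). Proof. by case: HGr => _ _ _ _ H5; case: (H5 g). Qed.

Ltac st := repeat (rewrite ?si ?ti ?su ?tu;
   first [ rewrite sm; [|st] | rewrite tm; [|st] | idtac ]); congruence.

Lemma lcancel a b c : s a = t b -> s a = t c -> m a b = m a c -> b = c.
Proof.
move=> Hb Hc E.
rewrite -(lu b) -(lu c) -Hb -Hc -linv.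
by rewrite (mA (si a) Hb) (mA (si a) Hc) E.
Qed.

Lemma ii a : i (i a) = a.
Proof.
apply: (@lcancel (i a)); first by rewrite ti.
  by rewrite si.
by rewrite rinv linv ti.
Qed.

Lemma i_mul {p q} : s p = t q -> i (m p q) = m (i q) (i p).
Proof.
move=> Hpq.
apply: (@lcancel (m p q)); first by rewrite ti.
  by st.
rewrite rinv (tm Hpq).
have H1 : s q = t (m (i q) (i p)) by st.
rewrite (mA Hpq H1).
have H2 : s q = t (i q) by rewrite ti.
have H3 : s (i q) = t (i p) by rewrite si ti.
rewrite -(mA H2 H3) rinv.
have -> : t q = t (i p) by rewrite ti.
by rewrite lu rinv.
Qed.

Lemma iu x : i (u x) = u x.
Proof.
apply: (@lcancel (u x)); first by rewrite ti.
  by rewrite su tu.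
by rewrite rinv tu; have := ru (u x); rewrite su => ->.
Qed.

Definition cj a c := m (m (i a) c) a.

Lemma C_st {x c} : comm_sub s t u i m x c -> s c = x /\ t c = x.
Proof.
elim=> [|g h Hsg Htg Hsh Hth|a b _ [Ha1 Ha2] _ [Hb1 Hb2]|a _ [Ha1 Ha2]].
- by rewrite su tu.
- split; st.
- split; st.
- by rewrite si ti.
Qed.

Lemma cj_unit a : cj a (u (t a)) = u (s a).
Proof. by rewrite /cj -si ru linv. Qed.

Lemma cj_mul a c d x : s c = x -> t c = x -> s d = x -> t d = x -> t a = x ->
  cj a (m c d) = m (cj a c) (cj a d).
Proof.
move=> sc tc sd td ta; rewrite /cj.
have E1 : s (m (i a) c) = t a by st.
have E2 : s a = t (m (m (i a) d) a) by st.
rewrite (mA E1 E2).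
have E3 : s a = t (m (i a) d) by st.
have E4 : s (m (i a) d) = t a by st.
rewrite -(mA E3 E4).
have E5 : s a = t (i a) by rewrite ti.
have E6 : s (i a) = t d by st.
rewrite -(mA E5 E6) rinv.
have -> : t a = t d by congruence.
rewrite lu.
have E7 : s (m (i a) c) = t d by st.
have E8 : s d = t a by congruence.
rewrite -(mA E7 E8).
have E9 : s (i a) = t c by st.
have E10 : s c = t d by congruence.
by rewrite (mA E9 E10).
Qed.

Lemma cj_inv a c x : s c = x -> t c = x -> t a = x -> cj a (i c) = i (cj a c).
Proof.
move=> sc tc ta; rewrite /cj.
have E1 : s (m (i a) c) = t a by st.
rewrite (i_mul E1).
have E2 : s (i a) = t c by st.
rewrite (i_mul E2) ii.
have E3 : s (i a) = t (i c) by st.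
have E4 : s (i c) = t a by st.
by rewrite (mA E3 E4).
Qed.

Lemma C_conj {x c a} : comm_sub s t u i m x c -> t a = x ->
  comm_sub s t u i m (s a) (cj a c).
Proof.
move=> H; elim: H a => [|g h Hsg Htg Hsh Hth|c1 c2 H1 IH1 H2 IH2|c1 H1 IH1] a ta.
- rewrite -ta cj_unit; exact: comm_unit.
- have Hgh : s g = t h by congruence.
  have Hi : s (i g) = t (i h) by rewrite si ti; congruence.
  rewrite (@cj_mul a _ _ x); try by st.
  rewrite (@cj_mul a _ _ x) //.
  rewrite (@cj_mul a _ _ x) //; try by st.
  rewrite (@cj_inv a _ x) // (@cj_inv a _ x) //.
  apply: comm_comm; rewrite /cj; st.
- have [? ?] := C_st H1; have [? ?] := C_st H2.
  rewrite (@cj_mul a _ _ x) //; exact: comm_mul (IH1 a ta) (IH2 a ta).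
- have [? ?] := C_st H1.
  rewrite (@cj_inv a _ x) //; exact: comm_inv (IH1 a ta).
Qed.


Lemma ab_t {g h} : ab_rel s t u i m g h -> t g = t h.
Proof.
case=> Hs [x Hc]; have [H1 H2] := C_st Hc.
have E : s g = t (i h) by rewrite ti.
rewrite (sm E) si in H1; rewrite (tm E) in H2; congruence.
Qed.

Lemma ab_i g h : ab_rel s t u i m g h -> ab_rel s t u i m (i g) (i h).
Proof.
move=> Hab; have Ht := ab_t Hab; case: Hab => Hs [x Hc].
have [H1 H2] := C_st Hc.
have E : s g = t (i h) by rewrite ti.
rewrite (tm E) in H2.
split; first by rewrite !si.
exists (s g); rewrite ii.
have := C_conj (comm_inv Hc) H2.
have -> : cj g (i (m g (i h))) = m (i g) h; last by [].
rewrite /cj (i_mul E) ii.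
have E1 : s (i g) = t (m h (i g)) by st.
have E2 : s (m h (i g)) = t g by st.
rewrite (mA E1 E2).
have E3 : s h = t (i g) by st.
have E4 : s (i g) = t g by st.
by rewrite (mA E3 E4) linv Hs ru.
Qed.

Lemma ab_m g g' h h' : ab_rel s t u i m g g' -> ab_rel s t u i m h h' ->
  s g = t h -> s g' = t h' -> ab_rel s t u i m (m g h) (m g' h').
Proof.
move=> Hg Hh Hgh Hgh'.
have Htg := ab_t Hg; have Hth := ab_t Hh.
case: Hg => Hsg [x Hcg]; case: Hh => Hsh [y Hch].
split; first by rewrite (sm Hgh) (sm Hgh').
have [A1 A2] := C_st Hcg; have [B1 B2] := C_st Hch.
have E : s g = t (i g') by rewrite ti.
have E' : s h = t (i h') by rewrite ti.
rewrite (tm E) in A2; rewrite (tm E') in B2.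
have Hc1 : t (i g) = y by rewrite ti; congruence.
have H1 := C_conj Hch Hc1; rewrite si A2 in H1.
exists x.
have := comm_mul H1 Hcg.
have -> : m (cj (i g) (m h (i h'))) (m g (i g')) = m (m g h) (i (m g' h')); last by [].
rewrite /cj ii (i_mul Hgh').
have E1 : s (m g (m h (i h'))) = t (i g) by st.
have E2 : s (i g) = t (m g (i g')) by st.
rewrite (mA E1 E2).
have E3 : s (i g) = t g by st.
rewrite -(mA E3 E) linv.
have -> : s g = t (i g') by rewrite ti.
rewrite lu.
have E5 : s g = t h by [].
rewrite -(mA E5 E').
have E6 : s (m g h) = t (i h') by st.
have E7 : s (i h') = t (i g') by st.
by rewrite (mA E6 E7).
Qed.

End Alg.

End HB.
Import HB.

Module HC.
Import Order.TTheory GRing.Theory Num.Theory.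
Import numFieldNormedType.Exports.
Local Open Scope classical_set_scope.
Local Open Scope ring_scope.

Lemma Dom_eq n (U : set (Rn n)) (a b : Dom U) : sval a = sval b -> a = b.
Proof.
case: a b => a Ha [b Hb] /= E; subst b; congr exist; exact: Prop_irrelevance.
Qed.

Lemma incl_id n (U : set (Rn n)) (y : Dom U) : Defs.incl (fun x (h : U x) => h) y = y.
Proof. exact: Dom_eq. Qed.

Section QD.
Variables (G : diffeological_space) (Q : Type) (q : G -> Q).

Lemma q_plot n (U : set (Rn n)) (PG : Dom U -> G) : dplot PG -> quotient_plot q (q \o PG).
Proof.
case: (dplotP G) => A1 A2 A3 A4 HP; have oU := A1 _ _ _ HP; split => // r.
exists U, (fun x (h : U x) => h); split => //; first exact: (proj2_sig r).
by right; exists PG; split => // y; rewrite incl_id.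
Qed.

Lemma lift_plot (qs : forall y : Q, exists g, q g = y) n (U : set (Rn n)) (P : Dom U -> Q) :
  quotient_plot q P -> forall r : Dom U, exists V (HVU : V `<=` U),
  [/\ open V, V (sval r) & exists PG : Dom V -> G, dplot PG /\ forall y, P (Defs.incl HVU y) = q (PG y)].
Proof.
case: (dplotP G) => A1 A2 A3 A4 [oU HP] r.
have [V [HVU [oV Vr [[c Hc]|[PG [HPG E]]]]]] := HP r; exists V, HVU; split => //.
  have [g Hg] := qs c; exists (fun _ => g); split; first exact: A2.
  by move=> y; rewrite Hc.
by exists PG.
Qed.

Lemma qdiff : is_diffeology (quotient_plot q).
Proof.
case: (dplotP G) => A1 A2 A3 A4; split.
- by move=> n U P [].
- move=> n U x oU; split => // r; exists U, (fun x (h : U x) => h); split => //.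
    exact: (proj2_sig r).
  by left; exists x.
- move=> n U P oU H; split => // r.
  have [V [HVU [oV Vr [_ Hq]]]] := H r.
  have [W [HWV [oW Wr Hc]]] := Hq (exist _ (sval r) Vr).
  exists W, (fun x h => HVU x (HWV x h)); split => //.
  have EI : forall y, Defs.incl (fun x h => HVU x (HWV x h)) y = Defs.incl HVU (Defs.incl HWV y).
    by move=> y; apply: Dom_eq.
  case: Hc => [[c Hc]|[PG [HPG E]]].
    by left; exists c => y; rewrite EI; apply: Hc.
  by right; exists PG; split => // y; rewrite EI; apply: E.
- move=> n k U V P F oV [f [Hf Ck]] [oU HP]; split => // r.
  have [W [HWU [oW Wr Hc]]] := HP (F r).
  pose V' := [set y | V y /\ W (f y)].
  have oV' : open V'.
    by apply: open_pre => //; apply: (Ck 0%N).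
  have HV'V : V' `<=` V by move=> x [].
  have inW : forall y : Dom V', W (sval (F (Defs.incl HV'V y))).
    by move=> y; rewrite -(Hf (Defs.incl HV'V y)); exact: (proj2 (proj2_sig y)).
  pose F' := fun y => exist W _ (inW y).
  have EF : forall y, F (Defs.incl HV'V y) = Defs.incl HWU (F' y) by move=> y; apply: Dom_eq.
  exists V', HV'V; split => //.
    by split; [exact: (proj2_sig r) | rewrite Hf].
  case: Hc => [[c Hc]|[PG [HPG E]]].
    by left; exists c => y /=; rewrite EF Hc.
  right; exists (PG \o F'); split; last by move=> y /=; rewrite EF E.
  apply: A4 HPG => //; exists f; split.
    by move=> y; rewrite /= -Hf.
  by move=> k'; apply: Ck_sub (Ck k') => x [].
Qed.
End QD.

End HC.
Import HC.

Module HD.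
Import Order.TTheory GRing.Theory Num.Theory.
Import numFieldNormedType.Exports.
Local Open Scope classical_set_scope.
Local Open Scope ring_scope.

Lemma restr_plot (X : diffeological_space) n (U V : set (Rn n)) (H : V `<=` U)
  (P : Dom U -> X) : open V -> dplot P -> dplot (P \o Defs.incl H).
Proof.
case: (dplotP X) => A1 A2 A3 A4 oV HP; apply: A4 HP => //.
by exists id; split => // k; apply: Ck_id.
Qed.

Section QS.
Variables (G M : diffeological_space) (Q : Type) (q : G -> Q).
Hypothesis qs : forall y : Q, exists g, q g = y.
Let QD := DiffSpace (@qdiff G Q q).

Lemma smooth_toM (f : G -> M) (fQ : QD -> M) :
  smooth f -> (forall g, fQ (q g) = f g) -> smooth fQ.
Proof.
move=> sf Hq n U P /= HP.
case: (dplotP M) => A1 A2 A3 A4.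
apply: A3; first by case: HP.
move=> r; have [V [HVU [oV Vr [PG [HPG E]]]]] := @lift_plot G Q q qs _ _ _ HP r.
exists V, HVU; split => //.
have -> : (fQ \o P) \o Defs.incl HVU = f \o PG.
  by apply: funext => y /=; rewrite E Hq.
exact: sf.
Qed.

Lemma smooth_toQ (f : G -> G) (fQ : QD -> QD) :
  smooth f -> (forall g, fQ (q g) = q (f g)) -> smooth fQ.
Proof.
move=> sf Hq n U P /= HP; split; first by case: HP.
move=> r; have [V [HVU [oV Vr [PG [HPG E]]]]] := @lift_plot G Q q qs _ _ _ HP r.
exists V, HVU; split => //; right; exists (f \o PG); split; first exact: sf.
by move=> y /=; rewrite E Hq.
Qed.

Lemma smooth_MQ (f : M -> G) (fQ : M -> QD) :
  smooth f -> (forall x, fQ x = q (f x)) -> smooth fQ.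
Proof.
move=> sf Hq n U P HP.
have -> : fQ \o P = q \o (f \o P) by apply: funext => y /=; rewrite Hq.
exact: q_plot (sf _ _ _ HP).
Qed.

Lemma lsub_Q (f : G -> M) (fQ : QD -> M) :
  (forall x, locally_subductive_at f x) -> (forall g, fQ (q g) = f g) ->
  forall y, locally_subductive_at fQ y.
Proof.
move=> Hl Hq y n U P H0 HP Py; have [g Eg] := qs y; subst y.
rewrite Hq in Py.
have [V [HVU [HV0 [oV [Qp [HQ Q0 HQr]]]]]] := Hl g n U P H0 HP Py.
exists V, HVU, HV0; split => //; exists (q \o Qp); split.
- exact: q_plot.
- by rewrite /= Q0.
- by move=> r /=; rewrite Hq.
Qed.

End QS.

End HD.
Import HD.


Theorem mainTheorem15 (G M : diffeological_space) (s t : G -> M) (u : M -> G)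
  (i : G -> G) (m : G -> G -> G)
  (HG : locally_subductive_groupoid s t u i m)
  (Q : Type) (q : G -> Q)
  (q_surj : forall y : Q, exists g, q g = y)
  (q_eq : forall g h, q g = q h <-> ab_rel s t u i m g h) :
  exists (HQ : is_diffeology (quotient_plot q))
         (sQ tQ : Q -> M) (uQ : M -> Q) (iQ : Q -> Q) (mQ : Q -> Q -> Q),
    [/\ (forall g, sQ (q g) = s g /\ tQ (q g) = t g),
        (forall x, uQ x = q (u x)),
        (forall g, iQ (q g) = q (i g)),
        (forall g h, s g = t h -> mQ (q g) (q h) = q (m g h)) &
        @locally_subductive_groupoid (DiffSpace HQ) M sQ tQ uQ iQ mQ].
Proof.
case: HG => [[HGr [ss st] su_ si_ smm] [_ Hls] [_ Hlt]].
pose rep y := proj1_sig (cid (q_surj y)).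
have repP : forall y, q (rep y) = y by move=> y; exact: (proj2_sig (cid (q_surj y))).
have qE : forall g, ab_rel s t u i m (rep (q g)) g by move=> g; apply/q_eq; rewrite repP.
pose sQ y := s (rep y); pose tQ y := t (rep y); pose uQ x := q (u x).
pose iQ y := q (i (rep y)); pose mQ y z := q (m (rep y) (rep z)).
have sQq : forall g, sQ (q g) = s g by move=> g; case: (qE g).
have tQq : forall g, tQ (q g) = t g by move=> g; exact: (@ab_t _ _ _ _ _ _ _ HGr _ _ (qE g)).
have iQq : forall g, iQ (q g) = q (i g) by move=> g; apply/q_eq; exact: (@ab_i _ _ _ _ _ _ _ HGr _ _ (qE g)).
have mQq : forall g h, s g = t h -> mQ (q g) (q h) = q (m g h).
  move=> g h E; apply/q_eq; apply: (@ab_m _ _ _ _ _ _ _ HGr _ _ _ _ (qE g) (qE h)) => //.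
  by rewrite -/(sQ (q g)) -/(tQ (q h)) sQq tQq.
exists (@qdiff G Q q), sQ, tQ, uQ, iQ, mQ; split => //.
split; [split|split|split].
- have [H1 H2 H3 H4 H5] := HGr.
  split.
  + move=> y z; have [g <-] := q_surj y; have [h <-] := q_surj z.
    rewrite sQq tQq => E; rewrite (mQq _ _ E) !sQq !tQq; exact: H1.
  + move=> y1 y2 y3; have [f <-] := q_surj y1; have [g <-] := q_surj y2.
    have [h <-] := q_surj y3; rewrite !sQq !tQq => E1 E2.
    have E3 : s (m f g) = t h by rewrite (H1 _ _ E1).1.
    have E4 : s f = t (m g h) by rewrite (H1 _ _ E2).2.
    rewrite (mQq _ _ E1) (mQq _ _ E2) (mQq _ _ E3) (mQq _ _ E4); congr q; exact: H2.
  + by move=> x; rewrite /uQ sQq tQq; exact: H3.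
  + move=> y; have [g <-] := q_surj y; rewrite tQq sQq /uQ.
    have E1 : s (u (t g)) = t g by rewrite (H3 _).1.
    have E2 : s g = t (u (s g)) by rewrite (H3 _).2.
    by rewrite (mQq _ _ E1) (mQq _ _ E2) (H4 g).1 (H4 g).2.
  + move=> y; have [g <-] := q_surj y; rewrite iQq !sQq !tQq /uQ.
    have [A1 A2 A3 A4] := H5 g.
    have E1 : s g = t (i g) by rewrite A2.
    have E2 : s (i g) = t g by rewrite A1.
    by rewrite (mQq _ _ E1) (mQq _ _ E2) A3 A4.
- split.
    exact: (@smooth_toM _ _ _ q q_surj _ _ ss sQq).
  exact: (@smooth_toM _ _ _ q q_surj _ _ st tQq).
- by apply: (@smooth_MQ G M Q q u uQ su_).
- exact: (@smooth_toQ G Q q q_surj i iQ si_ iQq).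
- move=> n U P P' /= HP HP' Hst; split; first by case: HP.
  move=> r.
  have [Va [HVa [oa ra [PG1 [HPG1 E1]]]]] := @lift_plot G Q q q_surj _ _ _ HP r.
  have [Vb [HVb [ob rb [PG2 [HPG2 E2]]]]] := @lift_plot G Q q q_surj _ _ _ HP' r.
  pose W := (Va `&` Vb)%classic.
  have HW1 : (W `<=` Va)%classic by move=> x [].
  have HW2 : (W `<=` Vb)%classic by move=> x [].
  have HWU : (W `<=` U)%classic by move=> x [h _]; exact: (HVa _ h).
  have oW : open W by apply: openI.
  have EP1 : forall y, P (Defs.incl HWU y) = q (PG1 (Defs.incl HW1 y)).
    by move=> y; rewrite -E1; congr P; apply: Dom_eq.
  have EP2 : forall y, P' (Defs.incl HWU y) = q (PG2 (Defs.incl HW2 y)).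
    by move=> y; rewrite -E2; congr P'; apply: Dom_eq.
  have Est : forall y, s (PG1 (Defs.incl HW1 y)) = t (PG2 (Defs.incl HW2 y)).
    by move=> y; have := Hst (Defs.incl HWU y); rewrite EP1 EP2 sQq tQq.
  exists W, HWU; split => //.
  right; exists (fun y => m (PG1 (Defs.incl HW1 y)) (PG2 (Defs.incl HW2 y))); split.
    apply: smm => //.
      exact (@restr_plot G _ _ _ HW1 _ oW HPG1).
    exact (@restr_plot G _ _ _ HW2 _ oW HPG2).
  by move=> y; rewrite EP1 EP2 mQq.
- exact: (@smooth_toM _ _ _ q q_surj _ _ ss sQq).
- exact: (@lsub_Q _ _ _ q q_surj _ _ Hls sQq).
- exact: (@smooth_toM _ _ _ q q_surj _ _ st tQq).
- exact: (@lsub_Q _ _ _ q q_surj _ _ Hlt tQq).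
Qed.
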